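(* Let $k$ be a field of characteristic zero and $r,n\geq1$. The centers of $\mathcal{D}(\mathcal{A}(C_r\wr\mathfrak{S}_n))$ and of $\mathcal{D}(\mathcal{B}_n)$ are $k$.
   Context: $\mathcal{A}(C_r\wr\mathfrak{S}_n)$ denotes the arrangement in $k^n$ (coordinates $x_1,\ldots,x_n$) with defining polynomial $x_1\cdots x_n\prod_{1\le i<j\le n}(x_j^r-x_i^r)$; its module of tangent derivations is free with basis $\alpha_1(x_k)=x_k$, $\alpha_m(x_k)=x_k\prod_{i=1}^{m-1}(x_k^r-x_i^r)$ ($2\le m\le n$). $\mathcal{B}_n$ is the braid arrangement in $k^n$ with hyperplanes $x_i=x_j$, $1\le i<j\le n$. For an arrangement $\mathcal{A}$ with defining polynomial $Q$ in $S=k[x_1,\ldots,x_n]$, $\mathcal{D}(\mathcal{A})=\bigcap_{m\ge1}\{P\in\mathcal{D}(S):P\,Q^m\mathcal{D}(S)\subseteq Q^m\mathcal{D}(S)\}$, where $\mathcal{D}(S)$ is the algebra of differential operators on $S$; for these (free) arrangements it is the subalgebra of $\operatorname{End}_k(S)$ generated by the tangent derivations and multiplications by elements of $S$. *)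

(* Defs.v *)
From HB Require Import structures.
From mathcomp Require Import all_boot all_order all_algebra.
From mathcomp Require Import mpoly.
Set Implicit Arguments. Unset Strict Implicit. Unset Printing Implicit Defensive.
Import GRing.Theory.
Local Open Scope ring_scope.

Section Defs.
Variables (k : fieldType) (n : nat).
Local Notation S := {mpoly k[n]}.

Definition mulop (g : S) : S -> S := fun p => g * p.

Definition derop (f : 'I_n -> S) : S -> S :=
  fun p => \sum_(i < n) f i * mderiv i p.

(* theta is tangent to the arrangement with defining polynomial Q:
   theta(Q) \in Q S *)
Definition tangent (Q : S) (f : 'I_n -> S) : Prop :=
  exists h : S, derop f Q = Q * h.

Inductive gen_alg (G : (S -> S) -> Prop) : (S -> S) -> Prop :=
  | ga_gen P : G P -> gen_alg G P
  | ga_id : gen_alg G id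
  | ga_scale (c : k) P : gen_alg G P -> gen_alg G (fun p => c *: P p)
  | ga_add P1 P2 : gen_alg G P1 -> gen_alg G P2 -> gen_alg G (fun p => P1 p + P2 p)
  | ga_comp P1 P2 : gen_alg G P1 -> gen_alg G P2 -> gen_alg G (P1 \o P2).

(* D(A) for the (free) arrangement with defining polynomial Q: the subalgebra
   of End_k(S) generated by multiplications by elements of S and by the
   tangent derivations *)
Definition DA (Q : S) : (S -> S) -> Prop :=
  gen_alg (fun P => (exists g : S, P = mulop g) \/
                    (exists f, tangent Q f /\ P = derop f)).

Definition center_is_k (A : (S -> S) -> Prop) : Prop :=
  forall P : S -> S,
    (A P /\ (forall P', A P' -> P \o P' = P' \o P)) <->
    (exists c : k, P = (fun p => c *: p)).

(* defining polynomial of A(C_r wr S_n):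
   x_1...x_n prod_{i<j} (x_j^r - x_i^r) *)
Definition Q_wreath (r : nat) : S :=
  (\prod_(i < n) 'X_i) *
  \prod_(i < n) \prod_(j < n | (i < j)%N) ('X_j ^+ r - 'X_i ^+ r).

(* defining polynomial of the braid arrangement B_n: prod_{i<j} (x_i - x_j) *)
Definition Q_braid : S :=
  \prod_(i < n) \prod_(j < n | (i < j)%N) ('X_i - 'X_j).

End Defs.

(* Main.v *)
Require Import Defs.
From HB Require Import structures.
From mathcomp Require Import all_boot all_order all_algebra.
From mathcomp Require Import mpoly.
From Stdlib Require Import FunctionalExtensionality.
Set Implicit Arguments. Unset Strict Implicit. Unset Printing Implicit Defensive.
Import GRing.Theory.
Local Open Scope ring_scope.

Section Aux.
Variables (k : fieldType) (n : nat).
Local Notation S := {mpoly k[n]}.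

Lemma DA_lin (Q : S) P : DA Q P -> forall (c : k) p, P (c *: p) = c *: P p.
Proof.
elim => {P}.
- move=> P [[g ->]|[f [_ ->]]] c p.
  + by rewrite /mulop scalerAr.
  + rewrite /derop scaler_sumr; apply: eq_bigr => i _.
    by rewrite mderivZ scalerAr.
- by [].
- by move=> c' P _ IH c p; rewrite IH !scalerA mulrC.
- by move=> P1 P2 _ IH1 _ IH2 c p; rewrite IH1 IH2 scalerDr.
- by move=> P1 P2 _ IH1 _ IH2 c p /=; rewrite IH2 IH1.
Qed.

Lemma derop_single (Q : S) (i : 'I_n) p :
  derop (fun j => if j == i then Q else 0) p = Q * mderiv i p.
Proof.
rewrite /derop (bigD1 i) //= eqxx big1 ?addr0 // => j /negbTE ->.
by rewrite mul0r.
Qed.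

Lemma const_of_deriv (hk : [pchar k] =i pred0) (h : S) :
  (forall i, mderiv i h = 0) -> h = (h@_0%MM)%:MP.
Proof.
move=> Hd; apply/mpolyP => m; rewrite mcoeffC.
have [->|m0] := eqVneq m 0%MM; first by rewrite mulr1.
rewrite mulr0.
case: (boolP [exists i, (0 < m i)%N]) => [/existsP [i Hi]|/existsPn Hn].
- have le : (U_(i) <= m)%MM.
    apply/mnm_lepP => j; rewrite mnm1E; case: eqP => [<-|] //.
  have := congr1 (mcoeff (m - U_(i))%MM) (Hd i).
  rewrite mcoeff_deriv submK // mcoeff0 => /eqP.
  rewrite -mulr_natr mulf_eq0 => /orP [/eqP //|].
  by move/pcharf0P: hk => ->.
- case/eqP: m0; apply/mnmP => j; rewrite mnm0E.
  by have := Hn j; rewrite lt0n negbK => /eqP.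
Qed.

Lemma center_DA (hk : [pchar k] =i pred0) (Q : S) : Q != 0 -> center_is_k (DA Q).
Proof.
move=> Q0 P; split.
- move=> [HP Hc].
  have Hm g : P g = g * P 1.
    have := Hc (mulop g) (ga_gen (or_introl (ex_intro _ g erefl))).
    by move/(congr1 (fun F => F 1)) => /=; rewrite /mulop mulr1.
  set h := P 1 in Hm.
  have Hd i : mderiv i h = 0.
    pose f := fun j : 'I_n => if j == i then Q else 0.
    have tf : tangent Q f by exists (mderiv i Q); rewrite derop_single.
    have := Hc (derop f) (ga_gen (or_intror (ex_intro _ f (conj tf erefl)))).
    move/(congr1 (fun F => F 1)) => /=.
    rewrite !derop_single -/h.
    have -> : mderiv i (1 : S) = 0 by rewrite -[1 : S]/(1%:MP) mderivC.
    rewrite mulr0 Hm mul0r => /esym/eqP; rewrite mulf_eq0 (negbTE Q0) /=.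
    by move/eqP.
  exists (h@_0%MM); apply: functional_extensionality => p.
  have Hh := const_of_deriv hk Hd.
  rewrite Hm mulrC. rewrite {1}Hh. by rewrite mul_mpolyC.
- move=> [c ->]; split.
  + exact: (ga_scale c (ga_id _)).
  + move=> P' HP'; apply: functional_extensionality => p /=.
    by rewrite (DA_lin HP').
Qed.

Lemma X_neq0 (i : 'I_n) : ('X_i : S) != 0.
Proof.
apply/eqP => /(congr1 (mcoeff U_(i)%MM)); rewrite mcoeffX eqxx mcoeff0.
by move/eqP; rewrite oner_eq0.
Qed.

Lemma Xdiff_neq0 (i j : 'I_n) r : (1 <= r)%N -> i != j ->
  ('X_j ^+ r - 'X_i ^+ r : S) != 0.
Proof.
move=> hr hij; apply/eqP => /(congr1 (mcoeff (U_(j) *+ r)%MM)).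
rewrite mcoeffB !mcoeffXn eqxx mcoeff0.
have -> : ((U_(i) *+ r)%MM == (U_(j) *+ r)%MM) = false.
  apply/negbTE/eqP => /mnmP /(_ j); rewrite !mulmnE !mnm1E eqxx (negbTE hij).
  by rewrite mul0n mul1n => r0; move: hr; rewrite -r0.
by rewrite subr0 => /eqP; rewrite oner_eq0.
Qed.

End Aux.

Theorem corollary3p5 (k : fieldType) (hk : [pchar k] =i pred0) (r n : nat)
  (hr : (1 <= r)%N) (hn : (1 <= n)%N) :
  center_is_k (DA (Q_wreath k n r)) /\ center_is_k (DA (Q_braid k n)).
Proof.
split; apply: center_DA => //.
- rewrite /Q_wreath mulf_neq0 //.
  + by apply/prodf_neq0 => i _; apply: X_neq0.
  + apply/prodf_neq0 => i _; apply/prodf_neq0 => j hij.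
    by apply: Xdiff_neq0 => //; rewrite neq_ltn hij.
- rewrite /Q_braid; apply/prodf_neq0 => i _; apply/prodf_neq0 => j hij.
  rewrite -opprB oppr_eq0.
  have hne : i != j by rewrite neq_ltn hij.
  by have := @Xdiff_neq0 k n i j 1%N (erefl _) hne; rewrite !expr1.
Qed.
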